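(* Let $\mathcal X$ be the Hawaiian earring and $\Phi:\pi_1(\mathcal X,0)\times\pi_1(\mathcal X,0)\to\pi_1(\mathcal X\times\mathcal X,(0,0))$ the isomorphism $\Phi([f],[g])=[(f,g)]$, $(f,g)(t)=(f(t),g(t))$. Then $\Phi\big(\mathfrak P^\omega(\mathcal X)\times\mathfrak P^\omega(\mathcal X)\big)\ne\mathfrak P^\omega(\mathcal X\times\mathcal X)$ (although it is contained in it).
   Context: For $n\in\mathbb N$, $C_n=\{(x,y)\in\mathbb R^2: x^2+(y-\tfrac1n)^2=\tfrac1{n^2}\}$ and $\mathcal X=\bigcup_{n\in\mathbb N}C_n$, base point $0$. For a space $Z$ and $z_0\in Z$, an $\omega$-loop at $z_0$ is a continuous $k:[0,1]\to Z$ with $k(0)=k(1)=z_0$ all of whose fibres $k^{-1}(z)$ are finite; $\mathfrak P^\omega(Z,z_0)$ (written $\mathfrak P^\omega(Z)$) is the subgroup of $\pi_1(Z,z_0)$ generated by the homotopy classes (rel endpoints) of $\omega$-loops at $z_0$; here base points $0$ and $(0,0)$ are used. *)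

(* Defs.v *)
From Stdlib Require Import Reals List.
Open Scope R_scope.

Section Gen.
Context {P : Type} (d : P -> P -> R).

Definition I01 (t : R) : Prop := 0 <= t <= 1.

Definition pcont (f : R -> P) : Prop :=
  forall t, I01 t -> forall eps, eps > 0 ->
    exists delta, delta > 0 /\
      forall s, I01 s -> Rabs (s - t) < delta -> d (f s) (f t) < eps.

Definition pcont2 (H : R -> R -> P) : Prop :=
  forall s t, I01 s -> I01 t -> forall eps, eps > 0 ->
    exists delta, delta > 0 /\
      forall s' t', I01 s' -> I01 t' -> Rabs (s' - s) < delta ->
        Rabs (t' - t) < delta -> d (H s' t') (H s t) < eps.

Variables (Z : P -> Prop) (z0 : P).

Definition is_loop (k : R -> P) : Prop :=
  pcont k /\ (forall t, I01 t -> Z (k t)) /\ k 0 = z0 /\ k 1 = z0.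

Definition finite_fibres (k : R -> P) : Prop :=
  forall z, exists l : list R, forall t, I01 t -> k t = z -> In t l.

Definition omega_loop (k : R -> P) : Prop := is_loop k /\ finite_fibres k.

Definition homotopic (f g : R -> P) : Prop :=
  exists H : R -> R -> P, pcont2 H /\
    (forall s t, I01 s -> I01 t -> Z (H s t)) /\
    (forall t, I01 t -> H 0 t = f t /\ H 1 t = g t) /\
    (forall s, I01 s -> H s 0 = z0 /\ H s 1 = z0).

Definition const_loop : R -> P := fun _ => z0.
Definition concat (f g : R -> P) : R -> P :=
  fun t => if Rle_dec t (1/2) then f (2 * t) else g (2 * t - 1).
Definition rev_path (f : R -> P) : R -> P := fun t => f (1 - t).

Inductive omega_word : (R -> P) -> Prop :=
| ow_const : omega_word const_loop
| ow_cons : forall k w, omega_loop k -> omega_word w -> omega_word (concat k w)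
| ow_cons_inv : forall k w, omega_loop k -> omega_word w ->
    omega_word (concat (rev_path k) w).

(* [h] lies in the subgroup P^omega(Z,z0) of pi_1(Z,z0) *)
Definition in_Pomega (h : R -> P) : Prop :=
  is_loop h /\ exists w, omega_word w /\ homotopic h w.
End Gen.

Definition dist2 (p q : R * R) : R :=
  sqrt ((fst p - fst q)^2 + (snd p - snd q)^2).
(* product metric on R^2 x R^2 (induces the product topology) *)
Definition dist22 (p q : (R * R) * (R * R)) : R :=
  Rmax (dist2 (fst p) (fst q)) (dist2 (snd p) (snd q)).

Definition HE (p : R * R) : Prop :=
  exists n : nat, (fst p)^2 + (snd p - / INR (S n))^2 = (/ INR (S n))^2.
Definition HE0 : R * R := (0, 0).
Definition HExHE (p : (R * R) * (R * R)) : Prop := HE (fst p) /\ HE (snd p).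
Definition HExHE0 : (R * R) * (R * R) := (HE0, HE0).

Definition pair_path (f g : R -> R * R) : R -> (R * R) * (R * R) :=
  fun t => (f t, g t).

(* Main.v *)
Require Import Defs.
From Stdlib Require Import Reals ZArith List Lra Lia Psatz Classical ClassicalEpsilon.
Open Scope R_scope.


Lemma dist2_fst : forall p q, Rabs (fst p - fst q) <= dist2 p q.
Proof.
  intros [a b] [c d]; unfold dist2; cbn [fst snd].
  rewrite <- sqrt_Rsqr_abs. apply sqrt_le_1_alt. unfold Rsqr. pose proof (pow2_ge_0 (a-c)); pose proof (pow2_ge_0 (b-d)); nra.
Qed.

Lemma dist2_snd : forall p q, Rabs (snd p - snd q) <= dist2 p q.
Proof.
  intros [a b] [c d]; unfold dist2; cbn [fst snd].
  rewrite <- sqrt_Rsqr_abs. apply sqrt_le_1_alt. unfold Rsqr. pose proof (pow2_ge_0 (a-c)); pose proof (pow2_ge_0 (b-d)); nra.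
Qed.

Lemma dist2_lt : forall p q e, Rabs (fst p - fst q) < e / 2 -> Rabs (snd p - snd q) < e / 2 ->
  dist2 p q < e.
Proof.
  intros [a b] [c d] e H1 H2. unfold dist2; cbn [fst snd] in *.
  assert (He : 0 < e) by (pose proof (Rabs_pos (a - c)); lra).
  rewrite <- (sqrt_Rsqr e) by lra. apply sqrt_lt_1_alt. split.
  - pose proof (pow2_ge_0 (a-c)); pose proof (pow2_ge_0 (b-d)); lra.
  - unfold Rsqr.
    assert (A: (a - c)^2 = Rabs (a - c) ^2) by (rewrite pow2_abs; reflexivity).
    assert (B: (b - d)^2 = Rabs (b - d) ^2) by (rewrite pow2_abs; reflexivity).
    rewrite A, B. pose proof (Rabs_pos (a - c)). pose proof (Rabs_pos (b - d)). nra.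
Qed.

Lemma dist2_ge0 : forall p q, 0 <= dist2 p q.
Proof. intros; unfold dist2; apply sqrt_pos. Qed.

Lemma dist2_refl : forall p, dist2 p p = 0.
Proof. intros [a b]; unfold dist2; cbn [fst snd]. replace ((a-a)^2 + (b-b)^2) with 0 by ring. apply sqrt_0. Qed.

Lemma dist22_fst : forall p q, dist2 (fst p) (fst q) <= dist22 p q.
Proof. intros; unfold dist22; apply Rmax_l. Qed.
Lemma dist22_snd : forall p q, dist2 (snd p) (snd q) <= dist22 p q.
Proof. intros; unfold dist22; apply Rmax_r. Qed.

Lemma atan_pos : forall x, 0 < x -> 0 < atan x.
Proof. intros. rewrite <- atan_0. apply atan_increasing; lra. Qed.
Lemma atan_nonneg : forall x, 0 <= x -> 0 <= atan x.
Proof. intros x [H|H]. left; apply atan_pos; auto. subst; rewrite atan_0; lra. Qed.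

Lemma atan_sum_range : forall x y, x * y < 1 ->
  - (PI/2) < atan x + atan y < PI/2.
Proof.
  assert (Hpos : forall x y, 0 < x -> 0 < y -> x * y < 1 -> atan x + atan y < PI/2).
  { intros x y Hx Hy Hxy. assert (y < / x).
    { apply (Rmult_lt_reg_l x); auto. rewrite Rinv_r by lra. lra. }
    pose proof (atan_increasing _ _ H). rewrite atan_inv in H0 by auto. lra. }
  intros x y Hxy.
  pose proof (atan_bound x); pose proof (atan_bound y).
  destruct (Rlt_le_dec 0 x) as [Hx|Hx]; destruct (Rlt_le_dec 0 y) as [Hy|Hy].
  - pose proof (Hpos x y Hx Hy Hxy). pose proof (atan_pos x Hx). pose proof (atan_pos y Hy). lra.
  - assert (atan y <= 0). { destruct Hy. left; rewrite <- atan_0; apply atan_increasing; auto. subst; rewrite atan_0; lra. }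
    pose proof (atan_pos x Hx). lra.
  - assert (atan x <= 0). { destruct Hx. left; rewrite <- atan_0; apply atan_increasing; auto. subst; rewrite atan_0; lra. }
    pose proof (atan_pos y Hy). lra.
  - assert (atan x <= 0). { destruct Hx. left; rewrite <- atan_0; apply atan_increasing; auto. subst; rewrite atan_0; lra. }
    assert (atan y <= 0). { destruct Hy. left; rewrite <- atan_0; apply atan_increasing; auto. subst; rewrite atan_0; lra. }
    destruct (Req_dec x 0) as [->|Hx0]. { rewrite atan_0. lra. }
    destruct (Req_dec y 0) as [->|Hy0]. { rewrite atan_0. lra. }
    pose proof (Hpos (-x) (-y) ltac:(lra) ltac:(lra) ltac:(nra)).
    rewrite !atan_opp in H3. lra.
Qed.

Lemma atan_add : forall x y, x * y < 1 -> atan x + atan y = atan ((x + y) / (1 - x * y)).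
Proof.
  intros x y Hxy. pose proof (atan_sum_range x y Hxy) as Hr.
  pose proof (atan_bound x); pose proof (atan_bound y).
  assert (cx : cos (atan x) <> 0) by (apply Rgt_not_eq, cos_gt_0; lra).
  assert (cy : cos (atan y) <> 0) by (apply Rgt_not_eq, cos_gt_0; lra).
  assert (cxy : cos (atan x + atan y) <> 0) by (apply Rgt_not_eq, cos_gt_0; lra).
  pose proof (tan_plus (atan x) (atan y) cx cy cxy) as T.
  rewrite !tan_atan in T. specialize (T ltac:(lra)).
  rewrite <- T. rewrite atan_tan; lra.
Qed.

Definition dot (p q : R * R) : R := fst p * fst q + snd p * snd q.
Definition cross (p q : R * R) : R := fst p * snd q - snd p * fst q.
Definition ang (p q : R * R) : R := atan (cross p q / dot p q).

Lemma ang_same : forall p, ang p p = 0.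
Proof. intros [a b]; unfold ang, cross, dot; simpl.
  replace (a * b - b * a) with 0 by ring. unfold Rdiv; rewrite Rmult_0_l. apply atan_0. Qed.

Lemma ang_chain : forall p q r, dot p q > 0 -> dot q r > 0 -> dot p r > 0 ->
  ang p q + ang q r = ang p r.
Proof.
  intros [p1 p2] [q1 q2] [r1 r2]; unfold ang, dot, cross; simpl. intros H1 H2 H3.
  assert (Hq : q1 * q1 + q2 * q2 > 0).
  { destruct (Req_dec q1 0); destruct (Req_dec q2 0); subst; try nra. }
  set (c1 := p1 * q2 - p2 * q1) in *. set (d1 := p1 * q1 + p2 * q2) in *.
  set (c2 := q1 * r2 - q2 * r1) in *. set (d2 := q1 * r1 + q2 * r2) in *.
  assert (E1 : c1 * d2 + c2 * d1 = (q1*q1+q2*q2) * (p1 * r2 - p2 * r1)) by (unfold c1,c2,d1,d2; ring).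
  assert (E2 : d1 * d2 - c1 * c2 = (q1*q1+q2*q2) * (p1 * r1 + p2 * r2)) by (unfold c1,c2,d1,d2; ring).
  assert (Hxy : c1 / d1 * (c2 / d2) < 1).
  { replace (c1 / d1 * (c2 / d2)) with ((c1*c2) / (d1*d2)) by (field; lra).
    apply (Rmult_lt_reg_r (d1*d2)). nra. unfold Rdiv. rewrite Rmult_assoc, Rinv_l by nra. nra. }
  rewrite atan_add by exact Hxy. f_equal.
  replace (1 - c1 / d1 * (c2 / d2)) with ((d1 * d2 - c1 * c2) / (d1 * d2)) by (field; lra).
  replace (c1 / d1 + c2 / d2) with ((c1 * d2 + c2 * d1) / (d1 * d2)) by (field; lra).
  rewrite E1, E2. field. split; nra.
Qed.

Lemma ValAdh_near : forall u l, ValAdh u l -> forall e, e > 0 -> forall N, exists p, (N <= p)%nat /\ Rabs (u p - l) < e.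
Proof.
  intros u l H e He N. destruct (H (disc l (mkposreal e He)) N) as [p [Hp Hv]].
  - exists (mkposreal e He). intros y Hy; exact Hy.
  - exists p; split; auto.
Qed.

Lemma ValAdh_I01 : forall u l, ValAdh u l -> (forall n, I01 (u n)) -> I01 l.
Proof.
  intros u l H Hu. unfold I01. split.
  - destruct (Rle_lt_dec 0 l) as [|Hl]; auto.
    destruct (ValAdh_near u l H (-l) ltac:(lra) 0) as [p [_ Hp]].
    specialize (Hu p). unfold I01 in Hu. apply Rabs_def2 in Hp. lra.
  - destruct (Rle_lt_dec l 1) as [|Hl]; auto.
    destruct (ValAdh_near u l H (l-1) ltac:(lra) 0) as [p [_ Hp]].
    specialize (Hu p). unfold I01 in Hu. apply Rabs_def2 in Hp. lra.
Qed.

Lemma small_inv : forall e, e > 0 -> exists K, / INR (S K) < e.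
Proof.
  intros e He. destruct (INR_archimed e 1 He) as [n Hn].
  exists n. rewrite S_INR. pose proof (pos_INR n).
  apply (Rmult_lt_reg_l (INR n + 1)); [lra|]. rewrite Rinv_r by lra. nra.
Qed.

Lemma inv_S_le : forall a b, (a <= b)%nat -> / INR (S b) <= / INR (S a).
Proof.
  intros a b H. apply Rinv_le_contravar. apply lt_0_INR; lia. apply le_INR; lia.
Qed.

Lemma inv_S_pos : forall a, / INR (S a) > 0.
Proof. intros; apply Rinv_0_lt_compat, lt_0_INR; lia. Qed.

Lemma prod_lb : forall a b e, Rabs b < e -> a * b >= - (Rabs a * e).
Proof.
  intros a b e H. pose proof (Rabs_pos a). pose proof (Rabs_pos b).
  assert (a * b >= - Rabs (a*b)) by (pose proof (Rle_abs (-(a*b))); rewrite Rabs_Ropp in H2; lra).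
  rewrite Rabs_mult in H2. nra.
Qed.

Lemma near_dot : forall w, dot w w > 0 -> exists eta, eta > 0 /\
  forall p q, Rabs (fst p - fst w) < eta -> Rabs (snd p - snd w) < eta ->
              Rabs (fst q - fst w) < eta -> Rabs (snd q - snd w) < eta -> dot p q > 0.
Proof.
  intros [w1 w2] Hw. unfold dot in *; cbn [fst snd] in *.
  set (W := w1 * w1 + w2 * w2) in *.
  set (M := Rabs w1 + Rabs w2 + 1).
  assert (HM : M > 0) by (unfold M; pose proof (Rabs_pos w1); pose proof (Rabs_pos w2); lra).
  exists (Rmin 1 (W / (4 * M))). split.
  { apply Rmin_pos; [lra|]. apply Rdiv_lt_0_compat; lra. }
  intros [p1 p2] [q1 q2]; cbn [fst snd]. intros H1 H2 H3 H4.
  set (eta := Rmin 1 (W / (4 * M))) in *.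
  assert (He1 : eta <= 1) by apply Rmin_l.
  assert (He2 : eta * M <= W / 4).
  { assert (eta <= W / (4 * M)) by apply Rmin_r.
    apply (Rmult_le_compat_r M) in H; [|lra].
    replace (W / (4 * M) * M) with (W/4) in H by (field; lra). exact H. }
  assert (Heta : eta > 0) by (pose proof (Rabs_pos (p1 - w1)); lra).
  set (e1 := p1 - w1) in *. set (e2 := p2 - w2) in *. set (f1 := q1 - w1) in *. set (f2 := q2 - w2) in *.
  replace (p1 * q1 + p2 * q2) with (W + w1 * e1 + w1 * f1 + w2 * e2 + w2 * f2 + e1 * f1 + e2 * f2)
    by (unfold W, e1, e2, f1, f2; ring).
  pose proof (prod_lb w1 e1 eta H1). pose proof (prod_lb w1 f1 eta H3).
  pose proof (prod_lb w2 e2 eta H2). pose proof (prod_lb w2 f2 eta H4).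
  pose proof (prod_lb e1 f1 eta H3). pose proof (prod_lb e2 f2 eta H4).
  assert (Rabs e1 * eta <= eta * eta) by (pose proof (Rabs_pos e1); nra).
  assert (Rabs e2 * eta <= eta * eta) by (pose proof (Rabs_pos e2); nra).
  assert (eta * eta <= eta) by nra.
  unfold M in He2. nra.
Qed.

Lemma choice_nat : forall (A : Type) (P : nat -> A -> Prop), (forall n, exists a, P n a) ->
  exists f : nat -> A, forall n, P n (f n).
Proof.
  intros A P H. exists (fun n => proj1_sig (constructive_indefinite_description _ (H n))).
  intro n. exact (proj2_sig (constructive_indefinite_description _ (H n))).
Qed.

Lemma dotpos : forall F : R -> R -> R * R, pcont2 dist2 F ->
  (forall s t, I01 s -> I01 t -> dot (F s t) (F s t) > 0) ->
  exists delta, delta > 0 /\ forall s t s' t', I01 s -> I01 t -> I01 s' -> I01 t' ->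
    Rabs (s - s') < delta -> Rabs (t - t') < delta -> dot (F s t) (F s' t') > 0.
Proof.
  intros F HF Hnz. apply NNPP. intro Hn.
  assert (Hex : forall n, exists a : (R * R) * (R * R),
    I01 (fst (fst a)) /\ I01 (snd (fst a)) /\ I01 (fst (snd a)) /\ I01 (snd (snd a)) /\
    Rabs (fst (fst a) - fst (snd a)) < / INR (S n) /\ Rabs (snd (fst a) - snd (snd a)) < / INR (S n) /\
    dot (F (fst (fst a)) (snd (fst a))) (F (fst (snd a)) (snd (snd a))) <= 0).
  { intro n. apply NNPP. intro Hno. apply Hn. exists (/ INR (S n)). split. apply inv_S_pos.
    intros s t s' t' Hs Ht Hs' Ht' H1 H2. apply Rnot_le_lt. intro Hle. apply Hno.
    exists ((s, t), (s', t')); cbn [fst snd]; tauto. }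
  destruct (choice_nat _ _ Hex) as [sq Hsq].
  destruct (Bolzano_Weierstrass (fun n => fst (fst (sq n))) (fun c => 0 <= c <= 1) (compact_P3 0 1))
    as [l1 Hl1]. { intro n; apply (Hsq n). }
  assert (Hsub : forall k, exists p, (k <= p)%nat /\ Rabs (fst (fst (sq p)) - l1) < / INR (S k)).
  { intro k. apply (ValAdh_near _ _ Hl1). apply inv_S_pos. }
  destruct (choice_nat _ _ Hsub) as [phi Hphi].
  destruct (Bolzano_Weierstrass (fun k => snd (fst (sq (phi k)))) (fun c => 0 <= c <= 1) (compact_P3 0 1))
    as [l2 Hl2]. { intro n; apply (Hsq (phi n)). }
  assert (Il1 : I01 l1). { apply (ValAdh_I01 _ _ Hl1). intro n; apply (Hsq n). }
  assert (Il2 : I01 l2). { apply (ValAdh_I01 _ _ Hl2). intro n; apply (Hsq (phi n)). }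
  destruct (near_dot (F l1 l2) (Hnz l1 l2 Il1 Il2)) as [eta [Heta Hnd]].
  destruct (HF l1 l2 Il1 Il2 eta Heta) as [dc [Hdc Hc]].
  destruct (small_inv (dc / 2) ltac:(lra)) as [K0 HK0].
  destruct (ValAdh_near _ _ Hl2 (dc/2) ltac:(lra) K0) as [k [Hk Hk2]]. cbn beta in Hk2.
  destruct (Hphi k) as [Hpk Hs1].
  set (p := phi k) in *.
  destruct (Hsq p) as (I1 & I2 & I3 & I4 & D1 & D2 & Hd).
  set (s := fst (fst (sq p))) in *. set (t := snd (fst (sq p))) in *.
  set (s' := fst (snd (sq p))) in *. set (t' := snd (snd (sq p))) in *.
  pose proof (inv_S_le _ _ Hk). pose proof (inv_S_le _ _ Hpk).
  assert (A1 : Rabs (s - l1) < dc) by lra.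
  assert (A2 : Rabs (t - l2) < dc) by lra.
  assert (A3 : Rabs (s' - l1) < dc).
  { apply Rabs_def2 in D1; apply Rabs_def2 in Hs1. apply Rabs_def1; lra. }
  assert (A4 : Rabs (t' - l2) < dc).
  { apply Rabs_def2 in D2; apply Rabs_def2 in Hk2. apply Rabs_def1; lra. }
  pose proof (Hc s t I1 I2 A1 A2) as C1. pose proof (Hc s' t' I3 I4 A3 A4) as C2.
  assert (dot (F s t) (F s' t') > 0).
  { apply Hnd.
    - eapply Rle_lt_trans; [apply dist2_fst|exact C1].
    - eapply Rle_lt_trans; [apply dist2_snd|exact C1].
    - eapply Rle_lt_trans; [apply dist2_fst|exact C2].
    - eapply Rle_lt_trans; [apply dist2_snd|exact C2]. }
  lra.
Qed.

Fixpoint psum (F : nat -> R) (n : nat) : R :=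
  match n with O => 0 | S m => psum F m + F m end.

Lemma psum_ext : forall F G n, (forall k, (k < n)%nat -> F k = G k) -> psum F n = psum G n.
Proof.
  intros F G n; induction n; intros H; simpl; auto.
  rewrite IHn by (intros; apply H; lia). rewrite H by lia. reflexivity.
Qed.

Lemma psum_tele : forall g n, psum (fun k => g k - g (S k)) n = g O - g n.
Proof. intros g n; induction n; simpl. ring. rewrite IHn. ring. Qed.

Lemma psum_minus : forall F G n, psum (fun k => F k - G k) n = psum F n - psum G n.
Proof. intros F G n; induction n; simpl. ring. rewrite IHn. ring. Qed.

Lemma psum_const0 : forall n, psum (fun _ => 0) n = 0.
Proof. induction n; simpl; auto. rewrite IHn; ring. Qed.

Definition wsum (u : R -> R * R) (N : nat) : R :=
  psum (fun k => ang (u (INR k / INR N)) (u (INR (S k) / INR N))) N.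

Lemma wsum_ext : forall u v N, (forall t, I01 t -> u t = v t) -> wsum u N = wsum v N.
Proof.
  intros u v N H. unfold wsum. destruct N as [|N]. reflexivity.
  apply psum_ext. intros k Hk.
  assert (HN : INR (S N) > 0) by (apply lt_0_INR; lia).
  assert (forall j, (j <= S N)%nat -> I01 (INR j / INR (S N))).
  { intros j Hj. split. apply Rmult_le_pos; [apply pos_INR| left; apply Rinv_0_lt_compat; auto].
    apply (Rmult_le_reg_r (INR (S N))); auto. unfold Rdiv; rewrite Rmult_assoc, Rinv_l by lra.
    rewrite Rmult_1_l, Rmult_1_r. apply le_INR; auto. }
  rewrite !H by (apply H0; lia). reflexivity.
Qed.

Lemma wsum_const : forall p N, wsum (fun _ => p) N = 0.
Proof.
  intros p N. unfold wsum. rewrite (psum_ext _ (fun _ => 0)). apply psum_const0.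
  intros; apply ang_same.
Qed.

Lemma grid_I01 : forall N j, (0 < N)%nat -> (j <= N)%nat -> I01 (INR j / INR N).
Proof.
  intros N j HN Hj. assert (HN' : INR N > 0) by (apply lt_0_INR; lia).
  split. apply Rmult_le_pos; [apply pos_INR| left; apply Rinv_0_lt_compat; auto].
  apply (Rmult_le_reg_r (INR N)); auto. unfold Rdiv; rewrite Rmult_assoc, Rinv_l by lra.
  rewrite Rmult_1_l, Rmult_1_r. apply le_INR; auto.
Qed.

Lemma grid_step : forall N j, (0 < N)%nat -> Rabs (INR j / INR N - INR (S j) / INR N) = / INR N.
Proof.
  intros N j HN. assert (HN' : INR N > 0) by (apply lt_0_INR; lia).
  rewrite S_INR. replace (INR j / INR N - (INR j + 1) / INR N) with (- / INR N) by (field; lra).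
  rewrite Rabs_Ropp. apply Rabs_right. left; apply Rinv_0_lt_compat; auto.
Qed.

Lemma grid_lemma : forall F : R -> R -> R * R, pcont2 dist2 F ->
  (forall s t, I01 s -> I01 t -> dot (F s t) (F s t) > 0) ->
  (forall s, I01 s -> F s 0 = F s 1) ->
  exists N0, forall N, (N0 <= N)%nat -> wsum (F 0) N = wsum (F 1) N.
Proof.
  intros F HF Hnz Hend.
  destruct (dotpos F HF Hnz) as [d [Hd Hdp]].
  destruct (small_inv d Hd) as [K HK].
  exists (S K). intros N HN.
  assert (HN0 : (0 < N)%nat) by lia.
  assert (HNr : INR N > 0) by (apply lt_0_INR; lia).
  assert (Hstep : / INR N < d).
  { eapply Rle_lt_trans; [|exact HK]. apply Rinv_le_contravar. apply lt_0_INR; lia. apply le_INR; lia. }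
  set (G := fun i => wsum (F (INR i / INR N)) N).
  assert (HG : forall i, (i < N)%nat -> G i = G (S i)).
  { intros i Hi. unfold G, wsum.
    set (s := INR i / INR N). set (s' := INR (S i) / INR N).
    assert (Is : I01 s) by (apply grid_I01; lia). assert (Is' : I01 s') by (apply grid_I01; lia).
    assert (Dss : Rabs (s - s') < d) by (unfold s, s'; rewrite grid_step; auto).
    assert (Dss0 : Rabs (s - s) < d) by (rewrite Rminus_diag, Rabs_R0; auto).
    assert (Dss1 : Rabs (s' - s') < d) by (rewrite Rminus_diag, Rabs_R0; auto).
    assert (Dss2 : Rabs (s' - s) < d) by (rewrite Rabs_minus_sym; auto).
    apply Rminus_diag_uniq. rewrite <- psum_minus.
    set (g := fun k => ang (F s (INR k / INR N)) (F s' (INR k / INR N))).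
    rewrite (psum_ext _ (fun k => g k - g (S k))).
    - rewrite psum_tele. unfold g. rewrite Rdiv_0_l. replace (INR N / INR N) with 1 by (field; lra).
      rewrite (Hend s Is), (Hend s' Is'). ring.
    - intros k Hk. unfold g.
      set (t := INR k / INR N). set (t' := INR (S k) / INR N).
      assert (It : I01 t) by (apply grid_I01; lia). assert (It' : I01 t') by (apply grid_I01; lia).
      assert (Dtt : Rabs (t - t') < d) by (unfold t, t'; rewrite grid_step; auto).
      assert (Dtt0 : Rabs (t - t) < d) by (rewrite Rminus_diag, Rabs_R0; auto).
      assert (Dtt1 : Rabs (t' - t') < d) by (rewrite Rminus_diag, Rabs_R0; auto).
      assert (Dtt2 : Rabs (t' - t) < d) by (rewrite Rabs_minus_sym; auto).
      assert (E1 : ang (F s t) (F s t') + ang (F s t') (F s' t') = ang (F s t) (F s' t'))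
        by (apply ang_chain; apply Hdp; auto).
      assert (E2 : ang (F s t) (F s' t) + ang (F s' t) (F s' t') = ang (F s t) (F s' t'))
        by (apply ang_chain; apply Hdp; auto).
      lra. }
  assert (HGi : forall i, (i <= N)%nat -> G 0%nat = G i).
  { induction i; intros Hi. reflexivity. rewrite IHi by lia. apply HG; lia. }
  specialize (HGi N (le_n N)). unfold G in HGi. simpl INR in HGi.
  rewrite Rdiv_0_l in HGi. replace (INR N / INR N) with 1 in HGi by (field; lra). exact HGi.
Qed.

Definition rho (n : nat) : R := / INR (S n).
Definition onC (n : nat) (p : R * R) : Prop := (fst p)^2 + (snd p - rho n)^2 = (rho n)^2.

Lemma HE_onC : forall p, HE p <-> exists n, onC n p.
Proof. intros; unfold HE, onC, rho; tauto. Qed.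

Lemma rho_pos : forall n, rho n > 0.
Proof. intros; apply inv_S_pos. Qed.

Lemma rho_inj : forall m n, rho m = rho n -> m = n.
Proof.
  intros m n H. unfold rho in H. apply Rinv_eq_reg in H. apply INR_eq in H. lia.
Qed.

Lemma onC_eq : forall n p, onC n p -> (fst p)^2 + (snd p)^2 = 2 * rho n * snd p.
Proof. intros n p H; unfold onC in H. lra. Qed.

Lemma onC_ypos : forall n p, onC n p -> p <> (0,0) -> snd p > 0.
Proof.
  intros n [x y] H Hp. apply onC_eq in H. cbn [fst snd] in *. pose proof (rho_pos n).
  destruct (Rlt_le_dec 0 y); auto. exfalso. apply Hp.
  assert (x^2 + y^2 <= 0) by nra. assert (x = 0) by nra. assert (y = 0) by nra. subst; auto.
Qed.

Lemma onC_two : forall m n p, onC m p -> onC n p -> m <> n -> p = (0,0).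
Proof.
  intros m n [x y] H1 H2 Hmn. apply onC_eq in H1. apply onC_eq in H2. cbn [fst snd] in *.
  assert (y * (rho m - rho n) = 0) by nra.
  apply Rmult_integral in H. destruct H as [Hy|Hr].
  - subst. assert (x = 0) by nra. subst; auto.
  - exfalso. apply Hmn, rho_inj. lra.
Qed.

Lemma onC_0 : forall n, onC n (0,0).
Proof. intros; unfold onC; cbn [fst snd]; ring. Qed.

Definition rn (n : nat) (p : R * R) : R * R :=
  if Req_EM_T ((fst p)^2 + (snd p - rho n)^2) ((rho n)^2) then p else (0,0).

Lemma rn_on : forall n p, onC n p -> rn n p = p.
Proof. intros n p H; unfold rn. destruct (Req_EM_T _ _); auto. contradiction. Qed.
Lemma rn_off : forall n p, ~ onC n p -> rn n p = (0,0).
Proof. intros n p H; unfold rn. destruct (Req_EM_T _ _); auto. contradiction. Qed.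
Lemma rn_onC : forall n p, onC n (rn n p).
Proof. intros n p; unfold rn. destruct (Req_EM_T _ _); auto. apply onC_0. Qed.

Definition vec (n : nat) (p : R * R) : R * R := (fst (rn n p), snd (rn n p) - rho n).

Lemma vec_nz : forall n p, dot (vec n p) (vec n p) > 0.
Proof.
  intros n p. pose proof (rn_onC n p). unfold onC in H. unfold vec, dot; cbn [fst snd].
  pose proof (rho_pos n). nra.
Qed.

Lemma vec_dist : forall n p q, dist2 (vec n p) (vec n q) = dist2 (rn n p) (rn n q).
Proof. intros; unfold dist2, vec; cbn [fst snd]. f_equal. ring. Qed.

Lemma rho_gap : forall j m, j <> m -> Rabs (rho j - rho m) >= rho m - rho (S m).
Proof.
  intros j m Hjm. unfold rho. pose proof (pos_INR m) as Hm. pose proof (pos_INR j) as Hj.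
  rewrite !S_INR.
  destruct (Nat.lt_ge_cases m j) as [Hlt|Hge].
  - assert (INR m + 1 <= INR j) by (rewrite <- S_INR; apply le_INR; lia).
    assert (/ (INR j + 1) <= / (INR m + 1 + 1)) by (apply Rinv_le_contravar; lra).
    assert (/ (INR j + 1) < / (INR m + 1)) by (apply Rinv_lt_contravar; nra).
    rewrite Rabs_left by lra. lra.
  - assert (j < m)%nat by lia.
    assert (INR j + 1 <= INR m) by (rewrite <- S_INR; apply le_INR; lia).
    assert (/ (INR m) <= / (INR j + 1)) by (apply Rinv_le_contravar; lra).
    assert (/ (INR m + 1) < / (INR j + 1)) by (apply Rinv_lt_contravar; nra).
    rewrite Rabs_right by lra.
    assert (/ INR m - / (INR m + 1) >= / (INR m + 1) - / (INR m + 1 + 1)).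
    { assert (INR m >= 1) by lra.
      replace (/ INR m - / (INR m + 1)) with (/ (INR m * (INR m + 1))) by (field; lra).
      replace (/ (INR m + 1) - / (INR m + 1 + 1)) with (/ ((INR m + 1) * (INR m + 1 + 1))) by (field; lra).
      apply Rle_ge, Rinv_le_contravar; nra. }
    lra.
Qed.

Lemma gap_rho_pos : forall m, rho m - rho (S m) > 0.
Proof.
  intros m; unfold rho. rewrite (S_INR (S m)). pose proof (pos_INR (S m)).
  assert (INR (S m) > 0) by (apply lt_0_INR; lia).
  assert (/ (INR (S m) + 1) < / INR (S m)) by (apply Rinv_lt_contravar; nra). lra.
Qed.

Lemma abs_prod_le : forall a b A B, Rabs a <= A -> Rabs b <= B -> Rabs (a * b) <= A * B.
Proof.
  intros. rewrite Rabs_mult. apply Rmult_le_compat; auto; apply Rabs_pos.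
Qed.

Lemma circle_gap : forall m p, onC m p -> p <> (0,0) ->
  exists d, d > 0 /\ forall j q, onC j q -> dist2 q p < d -> j = m.
Proof.
  intros m [xp yp] Hp Hp0.
  pose proof (onC_ypos m _ Hp Hp0) as Hy. cbn [snd] in Hy.
  pose proof (onC_eq m _ Hp) as Ep. cbn [fst snd] in Ep.
  set (K := 2 * Rabs xp + 2 * Rabs yp + 2 * rho m + 2).
  set (g := rho m - rho (S m)).
  assert (Hg : g > 0) by apply gap_rho_pos.
  assert (HK : K > 0) by (unfold K; pose proof (Rabs_pos xp); pose proof (Rabs_pos yp); pose proof (rho_pos m); lra).
  exists (Rmin 1 (Rmin (yp / 2) (g * yp / (2 * K)))). split.
  { apply Rmin_pos. lra. apply Rmin_pos. lra. apply Rdiv_lt_0_compat; nra. }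
  intros j [xq yq] Hq Hd.
  pose proof (onC_eq j _ Hq) as Eq. cbn [fst snd] in Eq.
  pose proof (dist2_fst (xq,yq) (xp,yp)) as D1. pose proof (dist2_snd (xq,yq) (xp,yp)) as D2.
  cbn [fst snd] in D1, D2.
  set (d := Rmin 1 (Rmin (yp / 2) (g * yp / (2 * K)))) in *.
  assert (d1 : d <= 1) by apply Rmin_l.
  assert (d2 : d <= yp / 2) by (eapply Rle_trans; [apply Rmin_r| apply Rmin_l]).
  assert (d3 : d <= g * yp / (2 * K)) by (eapply Rle_trans; [apply Rmin_r| apply Rmin_r]).
  assert (dx : Rabs (xq - xp) < d) by lra. assert (dy : Rabs (yq - yp) < d) by lra.
  assert (yq > yp / 2) by (apply Rabs_def2 in dy; lra).
  destruct (Nat.eq_dec j m) as [|Hne]; auto. exfalso.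
  pose proof (rho_gap j m Hne) as Hgap. fold g in Hgap.
  assert (Gid : xq^2 + yq^2 - 2 * rho m * yq = (xq - xp) * (xq + xp) + (yq - yp) * (yq + yp - 2 * rho m))
    by nra.
  assert (B1 : Rabs (xq + xp) <= 2 * Rabs xp + 1).
  { replace (xq + xp) with ((xq - xp) + 2 * xp) by ring.
    eapply Rle_trans; [apply Rabs_triang|]. rewrite Rabs_mult, (Rabs_right 2) by lra. lra. }
  assert (B2 : Rabs (yq + yp - 2 * rho m) <= 2 * Rabs yp + 1 + 2 * rho m).
  { replace (yq + yp - 2 * rho m) with ((yq - yp) + 2 * yp + - (2 * rho m)) by ring.
    eapply Rle_trans; [apply Rabs_triang|]. rewrite Rabs_Ropp, (Rabs_right (2 * rho m)) by (pose proof (rho_pos m); lra).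
    eapply Rplus_le_compat_r. eapply Rle_trans; [apply Rabs_triang|]. rewrite Rabs_mult, (Rabs_right 2) by lra. lra. }
  assert (T1 : Rabs ((xq - xp) * (xq + xp)) <= d * (2 * Rabs xp + 1)) by (apply abs_prod_le; lra).
  assert (T2 : Rabs ((yq - yp) * (yq + yp - 2 * rho m)) <= d * (2 * Rabs yp + 1 + 2 * rho m)) by (apply abs_prod_le; lra).
  assert (T : Rabs (xq^2 + yq^2 - 2 * rho m * yq) <= d * K).
  { rewrite Gid. eapply Rle_trans; [apply Rabs_triang|]. unfold K. lra. }
  assert (dK : d * K <= g * yp / 2).
  { apply (Rmult_le_compat_r K) in d3; [|lra]. replace (g * yp / (2 * K) * K) with (g * yp / 2) in d3 by (field; lra). lra. }
  replace (xq^2 + yq^2 - 2 * rho m * yq) with (2 * (rho j - rho m) * yq) in T by lra.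
  rewrite Rabs_mult, Rabs_mult, (Rabs_right 2), (Rabs_right yq) in T by lra.
  assert (2 * Rabs (rho j - rho m) * yq >= 2 * g * (yp / 2)) by nra.
  nra.
Qed.

Lemma rn_cont : forall n p, HE p -> forall e, e > 0 -> exists d, d > 0 /\
  forall q, HE q -> dist2 q p < d -> dist2 (rn n q) (rn n p) < e.
Proof.
  intros n p Hp e He.
  destruct (classic (p = (0,0))) as [->|Hp0].
  - exists e; split; auto. intros q Hq Hd. rewrite (rn_on n (0,0) (onC_0 n)).
    unfold rn. destruct (Req_EM_T _ _); auto. rewrite dist2_refl; auto.
  - apply HE_onC in Hp. destruct Hp as [m Hm].
    destruct (circle_gap m p Hm Hp0) as [d1 [Hd1 Hg]].
    exists (Rmin e d1). split. apply Rmin_pos; auto.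
    intros q Hq Hd. apply HE_onC in Hq. destruct Hq as [j Hj].
    assert (j = m) by (apply (Hg j q Hj); eapply Rlt_le_trans; [exact Hd| apply Rmin_r]). subst j.
    destruct (Nat.eq_dec m n) as [->|Hne].
    + rewrite !rn_on by auto. eapply Rlt_le_trans; [exact Hd| apply Rmin_l].
    + rewrite (rn_off n p) by (intro H; apply Hp0; apply (onC_two m n); auto).
      destruct (classic (onC n q)) as [Hqn|Hqn].
      * rewrite rn_on by auto. rewrite (onC_two m n q Hj Hqn Hne). rewrite dist2_refl; auto.
      * rewrite rn_off by auto. rewrite dist2_refl; auto.
Qed.

Lemma pcont2_comp : forall {P Q : Type} (dP : P -> P -> R) (dQ : Q -> Q -> R) (Z : P -> Prop)
  (g : P -> Q) (H : R -> R -> P), pcont2 dP H -> (forall s t, I01 s -> I01 t -> Z (H s t)) ->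
  (forall p, Z p -> forall e, e > 0 -> exists d, d > 0 /\ forall q, Z q -> dP q p < d -> dQ (g q) (g p) < e) ->
  pcont2 dQ (fun s t => g (H s t)).
Proof.
  intros P Q dP dQ Z g H HH HZ Hg s t Hs Ht e He.
  destruct (Hg (H s t) (HZ s t Hs Ht) e He) as [d1 [Hd1 Hg1]].
  destruct (HH s t Hs Ht d1 Hd1) as [d [Hd Hc]].
  exists d; split; [exact Hd|]. intros s' t' Hs' Ht' H1 H2. apply Hg1; auto.
Qed.

Lemma pcont_comp : forall {P Q : Type} (dP : P -> P -> R) (dQ : Q -> Q -> R) (Z : P -> Prop)
  (g : P -> Q) (H : R -> P), pcont dP H -> (forall t, I01 t -> Z (H t)) ->
  (forall p, Z p -> forall e, e > 0 -> exists d, d > 0 /\ forall q, Z q -> dP q p < d -> dQ (g q) (g p) < e) ->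
  pcont dQ (fun t => g (H t)).
Proof.
  intros P Q dP dQ Z g H HH HZ Hg t Ht e He.
  destruct (Hg (H t) (HZ t Ht) e He) as [d1 [Hd1 Hg1]].
  destruct (HH t Ht d1 Hd1) as [d [Hd Hc]].
  exists d; split; auto.
Qed.

Lemma vec_cont : forall n p, HE p -> forall e, e > 0 -> exists d, d > 0 /\
  forall q, HE q -> dist2 q p < d -> dist2 (vec n q) (vec n p) < e.
Proof.
  intros n p Hp e He. destruct (rn_cont n p Hp e He) as [d [Hd H]].
  exists d; split; auto. intros q Hq Hdq. rewrite vec_dist. auto.
Qed.

Lemma fst_cont : forall (p : (R*R)*(R*R)), True -> forall e, e > 0 -> exists d, d > 0 /\
  forall q, True -> dist22 q p < d -> dist2 (fst q) (fst p) < e.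
Proof.
  intros p _ e He. exists e; split; auto. intros q _ Hq.
  eapply Rle_lt_trans; [apply dist22_fst| exact Hq].
Qed.

Lemma homotopic_wsum : forall n f g, homotopic dist2 HE HE0 f g ->
  exists N0, forall N, (N0 <= N)%nat -> wsum (fun t => vec n (f t)) N = wsum (fun t => vec n (g t)) N.
Proof.
  intros n f g [H [Hc [HZ [Hfg Hend]]]].
  destruct (grid_lemma (fun s t => vec n (H s t))) as [N0 HN0].
  - apply (pcont2_comp dist2 dist2 HE); auto. apply vec_cont.
  - intros; apply vec_nz.
  - intros s Hs. destruct (Hend s Hs) as [E1 E2]. cbv beta. rewrite E1, E2; auto.
  - exists N0. intros N HN. specialize (HN0 N HN).
    rewrite (wsum_ext _ (fun t => vec n (H 0 t))). rewrite HN0.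
    apply wsum_ext. intros t Ht. destruct (Hfg t Ht) as [_ E]. rewrite E; auto.
    intros t Ht. destruct (Hfg t Ht) as [E _]. rewrite E; auto.
Qed.

Lemma homotopic_fst : forall h f g, homotopic dist22 HExHE HExHE0 h (pair_path f g) ->
  homotopic dist2 HE HE0 (fun t => fst (h t)) f.
Proof.
  intros h f g [H [Hc [HZ [Hfg Hend]]]].
  exists (fun s t => fst (H s t)). split; [|split; [|split]].
  - apply (pcont2_comp dist22 dist2 (fun _ => True)); auto. apply fst_cont.
  - intros s t Hs Ht. apply (HZ s t Hs Ht).
  - intros t Ht. destruct (Hfg t Ht) as [E1 E2]. rewrite E1, E2. split; reflexivity.
  - intros s Hs. destruct (Hend s Hs) as [E1 E2]. rewrite E1, E2. split; reflexivity.
Qed.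

Lemma cont_pt_intro : forall f x, (forall e, e > 0 -> exists d, d > 0 /\
  forall y, Rabs (y - x) < d -> Rabs (f y - f x) < e) -> continuity_pt f x.
Proof.
  intros f x H e He. destruct (H e He) as [d [Hd Hy]]. exists d; split; auto.
  intros y [_ Hy']. simpl in *. unfold R_dist in *. auto.
Qed.

Lemma cont_pt_elim : forall f x, continuity_pt f x -> forall e, e > 0 -> exists d, d > 0 /\
  forall y, Rabs (y - x) < d -> Rabs (f y - f x) < e.
Proof.
  intros f x H e He. destruct (H e He) as [d [Hd Hy]]. exists d; split; auto.
  intros y Hyx. destruct (Req_dec x y) as [<-|Hne].
  - rewrite Rminus_diag, Rabs_R0; auto.
  - apply (Hy y). split. split; auto. exact I. simpl; unfold R_dist; auto.
Qed.

Definition clamp (s t x : R) : R := Rmax s (Rmin t x).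

Lemma clamp_in : forall s t x, s <= t -> s <= clamp s t x <= t.
Proof.
  intros; unfold clamp. split. apply Rmax_l. apply Rmax_lub; auto. apply Rmin_l.
Qed.
Lemma clamp_id : forall s t x, s <= x <= t -> clamp s t x = x.
Proof. intros; unfold clamp. rewrite Rmin_right by lra. rewrite Rmax_right by lra. auto. Qed.
Lemma clamp_lip : forall s t x y, s <= t -> Rabs (clamp s t x - clamp s t y) <= Rabs (x - y).
Proof.
  intros s t x y Hst. unfold clamp.
  unfold Rmax, Rmin; repeat destruct Rle_dec; repeat (try rewrite Rminus_diag; try rewrite Rabs_R0);
  try apply Rabs_pos; try lra;
  apply Rabs_le; split; apply Rabs_def2b in n || idtac;
  try (pose proof (Rle_abs (x - y)); pose proof (Rle_abs (-(x - y))); rewrite Rabs_Ropp in *; lra).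
Qed.

Lemma pcont_clamp_fst : forall k s t, pcont dist2 k -> I01 s -> I01 t -> s <= t ->
  forall x, continuity_pt (fun y => fst (k (clamp s t y))) x.
Proof.
  intros k s t Hk Is It Hst x. apply cont_pt_intro. intros e He.
  assert (Ic : I01 (clamp s t x)) by (pose proof (clamp_in s t x Hst); unfold I01 in *; lra).
  destruct (Hk _ Ic e He) as [d [Hd H]]. exists d; split; auto. intros y Hy.
  assert (Iy : I01 (clamp s t y)) by (pose proof (clamp_in s t y Hst); unfold I01 in *; lra).
  eapply Rle_lt_trans; [apply dist2_fst|]. apply H; auto.
  eapply Rle_lt_trans; [apply clamp_lip; auto| exact Hy].
Qed.

Lemma pcont_clamp_snd : forall k s t, pcont dist2 k -> I01 s -> I01 t -> s <= t ->
  forall x, continuity_pt (fun y => snd (k (clamp s t y))) x.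
Proof.
  intros k s t Hk Is It Hst x. apply cont_pt_intro. intros e He.
  assert (Ic : I01 (clamp s t x)) by (pose proof (clamp_in s t x Hst); unfold I01 in *; lra).
  destruct (Hk _ Ic e He) as [d [Hd H]]. exists d; split; auto. intros y Hy.
  assert (Iy : I01 (clamp s t y)) by (pose proof (clamp_in s t y Hst); unfold I01 in *; lra).
  eapply Rle_lt_trans; [apply dist2_snd|]. apply H; auto.
  eapply Rle_lt_trans; [apply clamp_lip; auto| exact Hy].
Qed.

Lemma ivt_gen : forall f x y v, continuity f -> x < y -> (f x < v < f y \/ f y < v < f x) ->
  exists z, x <= z <= y /\ f z = v.
Proof.
  intros f x y v Hf Hxy [[H1 H2]|[H1 H2]].
  - destruct (IVT (fun z => f z - v) x y) as [z [Hz Ez]]; auto.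
    + apply continuity_minus; auto. apply continuity_const. intros a b; auto.
    + lra.
    + lra.
    + exists z; split; auto. lra.
  - destruct (IVT (fun z => v - f z) x y) as [z [Hz Ez]]; auto.
    + apply continuity_minus; auto. apply continuity_const. intros a b; auto.
    + lra.
    + lra.
    + exists z; split; auto. lra.
Qed.

Lemma rho_lt : forall a b, (a < b)%nat -> rho b < rho a.
Proof.
  intros a b H; unfold rho. apply Rinv_lt_contravar.
  apply Rmult_lt_0_compat; apply lt_0_INR; lia. apply lt_INR; lia.
Qed.
Lemma rho_le : forall a b, (a <= b)%nat -> rho b <= rho a.
Proof. intros a b H. destruct (Nat.eq_dec a b) as [->|]; [lra|]. left; apply rho_lt; lia. Qed.

Lemma nojump : forall phi s t, continuity phi -> s < t ->
  (forall x, s <= x <= t -> exists j, phi x = 2 * rho j) ->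
  forall a b, phi s = 2 * rho a -> phi t = 2 * rho b -> a = b.
Proof.
  intros phi s t Hc Hst Hv a b Ha Hb. apply NNPP; intro Hne.
  set (i := Nat.max a b). set (m := Nat.min a b).
  assert (Hmi : (m < i)%nat) by (unfold m, i; lia).
  destruct i as [|i'] eqn:Ei; [lia|].
  set (v := rho (S i') + rho i').
  pose proof (rho_lt i' (S i') ltac:(lia)).
  assert (Hmv : rho i' <= rho m) by (apply rho_le; lia).
  assert (Hbetween : phi s < v < phi t \/ phi t < v < phi s).
  { assert (Hab : (a = S i' /\ (b <= i')%nat) \/ (b = S i' /\ (a <= i')%nat)) by (unfold i, m in *; lia).
    destruct Hab as [[-> Hb']|[-> Ha']].
    - left. pose proof (rho_le b i' Hb'). unfold v; lra.
    - right. pose proof (rho_le a i' Ha'). unfold v; lra. }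
  destruct (ivt_gen phi s t v Hc Hst Hbetween) as [z [Hz Ez]].
  destruct (Hv z Hz) as [j Hj]. rewrite Hj in Ez. unfold v in Ez.
  destruct (Nat.le_gt_cases j i') as [Hj'|Hj'].
  - pose proof (rho_le j i' Hj'). lra.
  - pose proof (rho_le (S i') j ltac:(lia)). lra.
Qed.

Definition Gfun (p : R * R) : R := (fst p * fst p + snd p * snd p) / snd p.

Lemma Gfun_onC : forall j p, onC j p -> p <> (0,0) -> Gfun p = 2 * rho j.
Proof.
  intros j p H Hp. pose proof (onC_ypos j p H Hp). apply onC_eq in H. unfold Gfun.
  apply (Rmult_eq_reg_r (snd p)); [|lra]. unfold Rdiv. rewrite Rmult_assoc, Rinv_l by lra. nra.
Qed.

Lemma same_circle : forall k, pcont dist2 k -> (forall t, I01 t -> HE (k t)) ->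
  forall s t a b, I01 s -> I01 t -> s < t -> (forall x, s <= x <= t -> k x <> (0,0)) ->
  onC a (k s) -> onC b (k t) -> a = b.
Proof.
  intros k Hk HE' s t a b Is It Hst Hnz Ha Hb.
  set (phi := fun y => Gfun (k (clamp s t y))).
  assert (Hc : continuity phi).
  { intro x. unfold phi, Gfun.
    assert (Hin := clamp_in s t x ltac:(lra)).
    assert (Ix : I01 (clamp s t x)) by (unfold I01 in *; lra).
    destruct (HE' _ Ix) as [j Hj].
    assert (snd (k (clamp s t x)) > 0) by (apply (onC_ypos j); [exact Hj| apply Hnz; auto]).
    apply (continuity_pt_div (fun y => fst (k (clamp s t y)) * fst (k (clamp s t y)) + snd (k (clamp s t y)) * snd (k (clamp s t y)))
                             (fun y => snd (k (clamp s t y)))).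
    - apply (continuity_pt_plus (fun y => fst (k (clamp s t y)) * fst (k (clamp s t y))) (fun y => snd (k (clamp s t y)) * snd (k (clamp s t y)))).
      + apply (continuity_pt_mult (fun y => fst (k (clamp s t y))) (fun y => fst (k (clamp s t y)))); apply pcont_clamp_fst; unfold I01 in *; auto; lra.
      + apply (continuity_pt_mult (fun y => snd (k (clamp s t y))) (fun y => snd (k (clamp s t y)))); apply pcont_clamp_snd; unfold I01 in *; auto; lra.
    - apply pcont_clamp_snd; unfold I01 in *; auto; lra.
    - lra. }
  apply (nojump phi s t Hc Hst).
  - intros x Hx. unfold phi. rewrite clamp_id by auto.
    assert (Ix : I01 x) by (unfold I01 in *; lra).
    destruct (HE' _ Ix) as [j Hj]. exists j. apply Gfun_onC; auto.
  - unfold phi. rewrite clamp_id by lra. apply Gfun_onC; auto. apply Hnz; lra.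
  - unfold phi. rewrite clamp_id by lra. apply Gfun_onC; auto. apply Hnz; lra.
Qed.

Definition visits (k : R -> R * R) (n : nat) : Prop :=
  exists t, I01 t /\ onC n (k t) /\ k t <> (0,0).

Lemma list_max_P : forall (P : R -> Prop) l, (exists x, In x l /\ P x) ->
  exists x, In x l /\ P x /\ forall y, In y l -> P y -> y <= x.
Proof.
  intros P l; induction l as [|a l IH]; intros [x [Hx Px]].
  - destruct Hx.
  - destruct (classic (exists x, In x l /\ P x)) as [He|Hne].
    + destruct (IH He) as [m [Hm [Pm Hmax]]].
      destruct (classic (P a)) as [Pa|nPa].
      * destruct (Rle_dec a m).
        -- exists m; split; [right; auto|split; auto]. intros y [<-|Hy] Py; auto.
        -- exists a; split; [left; auto|split; auto]. intros y [<-|Hy] Py. lra. pose proof (Hmax y Hy Py); lra.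
      * exists m; split; [right; auto|split; auto]. intros y [<-|Hy] Py; auto. contradiction.
    + destruct Hx as [<-|Hx]; [|exfalso; apply Hne; eauto].
      exists a; split; [left; auto|split; auto]. intros y [<-|Hy] Py. lra. exfalso; apply Hne; eauto.
Qed.

Lemma NoDup_map_inj : forall (A B : Type) (f : A -> B) l, NoDup l ->
  (forall a b, In a l -> In b l -> f a = f b -> a = b) -> NoDup (map f l).
Proof.
  intros A B f l; induction l as [|a l IH]; intros Hnd Hinj; simpl. constructor.
  inversion Hnd; subst. constructor.
  - intro Hin. apply in_map_iff in Hin. destruct Hin as [x [Ex Hx]].
    assert (x = a) by (apply Hinj; simpl; auto). subst; contradiction.
  - apply IH; auto. intros; apply Hinj; simpl; auto.
Qed.

Lemma omega_finite : forall k, is_loop dist2 HE HE0 k -> finite_fibres k ->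
  exists B, forall n, (B <= n)%nat -> ~ visits k n.
Proof.
  intros k [Hk [HEk [Hk0 Hk1]]] Hff.
  destruct (Hff HE0) as [l Hl].
  assert (I0 : I01 0) by (unfold I01; lra).
  assert (Hl0 : In 0 l) by (apply Hl; auto).
  set (Q := fun n z => visits k n -> exists t, I01 t /\ onC n (k t) /\ k t <> (0,0) /\
      In z l /\ I01 z /\ k z = (0,0) /\ z <= t /\
      forall z', In z' l -> I01 z' -> k z' = (0,0) -> z' <= t -> z' <= z).
  assert (HQ : forall n, exists z, Q n z).
  { intro n. destruct (classic (visits k n)) as [[t [It [Ht Hnz]]]|Hnv].
    - destruct (list_max_P (fun z => I01 z /\ k z = (0,0) /\ z <= t) l) as [z [Hz [[Iz [Ez Lz]] Hmax]]].
      { exists 0. split; auto. split; auto. split; auto. unfold I01 in It; lra. }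
      exists z. unfold Q. intros _. exists t.
      do 7 (split; [auto|]).
      intros z' H1 H2 H3 H4. apply Hmax; auto.
    - exists 0. unfold Q. intro; contradiction. }
  destruct (choice_nat _ _ HQ) as [zf Hzf].
  assert (Hinj : forall a b, visits k a -> visits k b -> zf a = zf b -> a = b).
  { assert (Hcore : forall a b ta tb, ta < tb -> I01 ta -> I01 tb -> onC a (k ta) -> onC b (k tb) ->
       k ta <> (0,0) -> zf a = zf b -> zf a <= ta ->
       (forall z', In z' l -> I01 z' -> k z' = (0,0) -> z' <= tb -> z' <= zf b) -> a = b).
    { intros a b ta tb Hlt Ia Ib Ca Cb Nz Ez Lz Hmax.
      apply (same_circle k Hk HEk ta tb a b Ia Ib Hlt); auto.
      intros x Hx Hkx. assert (Ix : I01 x) by (unfold I01 in *; lra).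
      assert (In x l) by (apply Hl; auto).
      pose proof (Hmax x H Ix Hkx ltac:(lra)). rewrite <- Ez in H0.
      assert (x = ta) by lra. subst x. contradiction. }
    intros a b Va Vb Eab.
    destruct (Hzf a Va) as [ta [Ia [Ca [Na [Ina [Iza [Eza [Lza Ma]]]]]]]].
    destruct (Hzf b Vb) as [tb [Ib [Cb [Nb [Inb [Izb [Ezb [Lzb Mb]]]]]]]].
    destruct (Rtotal_order ta tb) as [Hlt|[Heq|Hgt]].
    - apply (Hcore a b ta tb); auto.
    - subst tb. destruct (Nat.eq_dec a b); auto. exfalso. apply Na. apply (onC_two a b); auto.
    - symmetry. apply (Hcore b a tb ta); auto. }
  assert (Hlen : forall V, NoDup V -> (forall n, In n V -> visits k n) -> (length V <= length l)%nat).
  { intros V Hnd HV. rewrite <- (length_map zf V). apply NoDup_incl_length.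
    - apply NoDup_map_inj; [auto|]. intros a b Ha Hb E. apply Hinj; auto.
    - intros z Hz. apply in_map_iff in Hz. destruct Hz as [n [<- Hn]].
      destruct (Hzf n (HV n Hn)) as [t [_ [_ [_ [Hin _]]]]]. exact Hin. }
  apply NNPP. intro Hno.
  assert (Hall : forall B, exists n, (B <= n)%nat /\ visits k n).
  { intro B. apply NNPP. intro H. apply Hno. exists B. intros n Hn Vn. apply H. eauto. }
  assert (Hbuild : forall j, exists V, NoDup V /\ length V = j /\ forall n, In n V -> visits k n).
  { induction j as [|j [V [Hnd [HlV HV]]]].
    - exists nil. repeat split; auto. constructor. intros n [].
    - destruct (Hall (S (list_max V))) as [n [Hn Vn]].
      exists (n :: V). split; [|split].
      + constructor; auto. intro Hin.
        assert (Hle : (n <= list_max V)%nat).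
        { pose proof (proj1 (list_max_le V (list_max V)) (le_n _)) as HF.
          rewrite Forall_forall in HF. apply HF; auto. }
        lia.
      + simpl; lia.
      + intros m [<-|Hm]; auto. }
  destruct (Hbuild (S (length l))) as [V [Hnd [HlV HV]]].
  pose proof (Hlen V Hnd HV). lia.
Qed.

Lemma not_visits_rn : forall k n t, ~ visits k n -> I01 t -> rn n (k t) = (0,0).
Proof.
  intros k n t Hv It. destruct (classic (onC n (k t))) as [Hon|Hoff].
  - rewrite rn_on by auto. apply NNPP; intro Hnz. apply Hv. exists t; auto.
  - apply rn_off; auto.
Qed.

Lemma omega_word_rn : forall w, omega_word dist2 HE HE0 w ->
  exists B, forall n, (B <= n)%nat -> forall t, I01 t -> rn n (w t) = (0,0).
Proof.
  intros w Hw; induction Hw as [|k w Hk Hw [B IH]|k w Hk Hw [B IH]].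
  - exists O. intros n _ t _. unfold const_loop, HE0. apply rn_on, onC_0.
  - destruct Hk as [Hl Hf]. destruct (omega_finite k Hl Hf) as [B1 HB1].
    exists (Nat.max B B1). intros n Hn t It. unfold Defs.concat. destruct (Rle_dec t (1/2)).
    + apply not_visits_rn. apply HB1; lia. unfold I01 in *; lra.
    + apply IH. lia. unfold I01 in *; lra.
  - destruct Hk as [Hl Hf]. destruct (omega_finite k Hl Hf) as [B1 HB1].
    exists (Nat.max B B1). intros n Hn t It. unfold Defs.concat, rev_path. destruct (Rle_dec t (1/2)).
    + apply not_visits_rn. apply HB1; lia. unfold I01 in *; lra.
    + apply IH. lia. unfold I01 in *; lra.
Qed.

Definition Ip (x : R) : R := IZR (Int_part x).

Lemma Ip_spec : forall x, Ip x <= x < Ip x + 1.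
Proof. intros x; unfold Ip; pose proof (base_Int_part x); lra. Qed.

Lemma Ip_unique : forall x (n : nat), INR n <= x < INR n + 1 -> Ip x = INR n.
Proof.
  intros x n H. unfold Ip. rewrite INR_IZR_INZ in *. f_equal. symmetry. apply Int_part_spec. lra.
Qed.

Lemma Ip_nat : forall x, 1 <= x -> exists j : nat, Ip x = INR (S j).
Proof.
  intros x Hx. pose proof (Ip_spec x). unfold Ip in *.
  set (z := Int_part x) in *.
  assert (Hz : (1 <= z)%Z).
  { assert (0 < IZR z) by lra. apply lt_IZR in H0. lia. }
  exists (Z.to_nat (z - 1)). rewrite S_INR, INR_IZR_INZ, Z2Nat.id by lia.
  rewrite minus_IZR. simpl. ring.
Qed.

Lemma Ip_0 : Ip 0 = 0.
Proof. replace 0 with (INR 0) by reflexivity. apply Ip_unique. simpl; lra. Qed.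

Lemma sin_2PIk : forall k : nat, sin (2 * PI * INR k) = 0.
Proof. intros k. replace (2 * PI * INR k) with (0 + 2 * INR k * PI) by ring. rewrite sin_period. apply sin_0. Qed.
Lemma cos_2PIk : forall k : nat, cos (2 * PI * INR k) = 1.
Proof. intros k. replace (2 * PI * INR k) with (0 + 2 * INR k * PI) by ring. rewrite cos_period. apply cos_0. Qed.

Definition rf (t : R) : R := / Ip (/ t).
Definition th (t : R) : R := 2 * PI * / t.
Definition fE (t : R) : R * R := (rf t * sin (th t), rf t * (1 - cos (th t))).
Definition gE (t : R) : R * R := (sin (2 * PI * t), 1 - cos (2 * PI * t)).

Lemma rf_0 : rf 0 = 0.
Proof. unfold rf. rewrite Rinv_0, Ip_0, Rinv_0. reflexivity. Qed.

Lemma fE_0 : fE 0 = (0,0).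
Proof. unfold fE. rewrite rf_0. f_equal; ring. Qed.

Lemma rf_bound : forall t, I01 t -> 0 <= rf t <= 1.
Proof.
  intros t [H0 H1]. destruct (Req_dec t 0) as [->|Ht]. rewrite rf_0; lra.
  assert (1 <= / t). { rewrite <- Rinv_1. apply Rinv_le_contravar; lra. }
  destruct (Ip_nat _ H) as [j Hj]. unfold rf. rewrite Hj.
  pose proof (pos_INR j). rewrite S_INR.
  split. left; apply Rinv_0_lt_compat; lra. rewrite <- Rinv_1. apply Rinv_le_contravar; lra.
Qed.

Lemma fE_HE : forall t, I01 t -> HE (fE t).
Proof.
  intros t [H0 H1]. destruct (Req_dec t 0) as [->|Ht].
  - rewrite fE_0. exists O. simpl. ring.
  - assert (1 <= / t). { rewrite <- Rinv_1. apply Rinv_le_contravar; lra. }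
    destruct (Ip_nat _ H) as [j Hj]. exists j. unfold fE, rf. rewrite Hj. cbn [fst snd].
    pose proof (sin2_cos2 (th t)). unfold Rsqr in H2. nra.
Qed.

Lemma fE_onC : forall t j, 0 < t -> Ip (/ t) = INR (S j) -> onC j (fE t).
Proof.
  intros t j Ht Hj. unfold onC, rho, fE, rf. rewrite Hj. cbn [fst snd].
  pose proof (sin2_cos2 (th t)). unfold Rsqr in H. nra.
Qed.

Lemma fE_1 : fE 1 = (0,0).
Proof.
  unfold fE, rf, th. rewrite Rinv_1.
  assert (E : Ip 1 = 1) by (apply (Ip_unique 1 1); simpl; lra). rewrite E, Rinv_1, Rmult_1_r. replace (2 * PI) with (2 * PI * INR 1) by (simpl; ring).
  rewrite sin_2PIk, cos_2PIk. f_equal; ring.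
Qed.

Lemma cont_sin_th : forall t0, 0 < t0 -> continuity_pt (fun t => sin (th t)) t0.
Proof.
  intros t0 Ht0. apply (continuity_pt_comp th sin).
  - unfold th. apply (continuity_pt_mult (fun _ => 2 * PI) (fun t => / t)).
    apply continuity_pt_const; intros a b; auto.
    apply (continuity_pt_inv (fun t => t)). apply derivable_continuous_pt, derivable_pt_id. lra.
  - apply continuity_sin.
Qed.
Lemma cont_cos_th : forall t0, 0 < t0 -> continuity_pt (fun t => cos (th t)) t0.
Proof.
  intros t0 Ht0. apply (continuity_pt_comp th cos).
  - unfold th. apply (continuity_pt_mult (fun _ => 2 * PI) (fun t => / t)).
    apply continuity_pt_const; intros a b; auto.
    apply (continuity_pt_inv (fun t => t)). apply derivable_continuous_pt, derivable_pt_id. lra.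
  - apply continuity_cos.
Qed.
Lemma cont_inv : forall t0, 0 < t0 -> continuity_pt (fun t => / t) t0.
Proof.
  intros t0 Ht0. apply (continuity_pt_inv (fun t => t)). apply derivable_continuous_pt, derivable_pt_id. lra.
Qed.

Lemma abs_le_1_sin : forall x, Rabs (sin x) <= 1.
Proof. intros; apply Rabs_le; pose proof (SIN_bound x); lra. Qed.

Lemma fE_cont : pcont dist2 fE.
Proof.
  intros t0 It0 e He.
  destruct (Req_dec t0 0) as [->|Ht0].
  - exists (Rmin (1/2) (e / 8)). split. apply Rmin_pos; lra.
    intros s Is Hs. rewrite fE_0. rewrite Rminus_0_r in Hs.
    assert (Hs2 : s < 1/2 /\ s < e / 8).
    { destruct Is. rewrite Rabs_right in Hs by lra. split; eapply Rlt_le_trans; eauto. apply Rmin_l. apply Rmin_r. }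
    destruct (Req_dec s 0) as [->|Hs0]. rewrite fE_0, dist2_refl; lra.
    assert (Hsp : 0 < s) by (destruct Is; lra).
    assert (Hrf : rf s <= 2 * s).
    { unfold rf. pose proof (Ip_spec (/ s)).
      assert (2 <= / s). { replace 2 with (/ (1/2)) by field. apply Rinv_le_contravar; lra. }
      assert (/ s - 1 >= / (2 * s)).
      { rewrite Rinv_mult. assert (/ s > 0) by (apply Rinv_0_lt_compat; lra). lra. }
      assert (0 < / (2 * s)) by (apply Rinv_0_lt_compat; lra).
      replace (2 * s) with (/ / (2 * s)) by (rewrite Rinv_inv; auto).
      apply Rinv_le_contravar; lra. }
    pose proof (rf_bound s Is).
    apply dist2_lt; unfold fE; cbn [fst snd]; rewrite Rminus_0_r.
    + rewrite Rabs_mult, (Rabs_right (rf s)) by lra. pose proof (abs_le_1_sin (th s)).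
      pose proof (Rabs_pos (sin (th s))). nra.
    + rewrite Rabs_mult, (Rabs_right (rf s)) by lra.
      assert (Rabs (1 - cos (th s)) <= 2) by (apply Rabs_le; pose proof (COS_bound (th s)); lra).
      pose proof (Rabs_pos (1 - cos (th s))). nra.
  - assert (Hp : 0 < t0) by (destruct It0; lra).
    destruct (cont_pt_elim _ _ (cont_sin_th t0 Hp) (e/2) ltac:(lra)) as [d1 [Hd1 H1]].
    destruct (cont_pt_elim _ _ (cont_cos_th t0 Hp) (e/2) ltac:(lra)) as [d2 [Hd2 H2]].
    assert (HX : 1 <= / t0). { rewrite <- Rinv_1. apply Rinv_le_contravar; destruct It0; lra. }
    destruct (Ip_nat _ HX) as [j Hj].
    destruct (Req_dec (/ t0) (INR (S j))) as [Hint|Hnint].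
    +
      assert (E0 : fE t0 = (0,0)).
      { unfold fE, th. rewrite Hint. rewrite sin_2PIk, cos_2PIk. f_equal; ring. }
      exists (Rmin d1 d2). split. apply Rmin_pos; auto.
      intros s Is Hs. rewrite E0.
      assert (Hs1 : Rabs (s - t0) < d1) by (eapply Rlt_le_trans; [exact Hs| apply Rmin_l]).
      assert (Hs2 : Rabs (s - t0) < d2) by (eapply Rlt_le_trans; [exact Hs| apply Rmin_r]).
      specialize (H1 s Hs1). specialize (H2 s Hs2).
      assert (sin (th t0) = 0) by (unfold th; rewrite Hint; apply sin_2PIk).
      assert (cos (th t0) = 1) by (unfold th; rewrite Hint; apply cos_2PIk).
      rewrite H, Rminus_0_r in H1. rewrite H0 in H2.
      pose proof (rf_bound s Is).
      apply dist2_lt; unfold fE; cbn [fst snd]; rewrite Rminus_0_r.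
      * rewrite Rabs_mult, (Rabs_right (rf s)) by lra. pose proof (Rabs_pos (sin (th s))). nra.
      * rewrite Rabs_mult, (Rabs_right (rf s)) by lra. rewrite Rabs_minus_sym.
        pose proof (Rabs_pos (cos (th s) - 1)). nra.
    + pose proof (Ip_spec (/ t0)) as Hsp. rewrite Hj in Hsp.
      assert (Hlt : INR (S j) < / t0) by lra.
      set (g := Rmin (/ t0 - INR (S j)) (INR (S j) + 1 - / t0)).
      assert (Hg : g > 0) by (apply Rmin_pos; lra).
      destruct (cont_pt_elim _ _ (cont_inv t0 Hp) g Hg) as [d3 [Hd3 H3]].
      exists (Rmin (Rmin d1 d2) (Rmin d3 t0)). split. repeat apply Rmin_pos; auto.
      intros s Is Hs.
      assert (Hs1 : Rabs (s - t0) < d1) by (eapply Rlt_le_trans; [exact Hs| eapply Rle_trans; apply Rmin_l]).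
      assert (Hs2 : Rabs (s - t0) < d2) by (eapply Rlt_le_trans; [exact Hs| eapply Rle_trans; [apply Rmin_l|apply Rmin_r]]).
      assert (Hs3 : Rabs (s - t0) < d3) by (eapply Rlt_le_trans; [exact Hs| eapply Rle_trans; [apply Rmin_r|apply Rmin_l]]).
      specialize (H1 s Hs1). specialize (H2 s Hs2). specialize (H3 s Hs3).
      assert (Hrf : rf s = rf t0).
      { unfold rf. f_equal. rewrite Hj. apply Ip_unique.
        apply Rabs_def2 in H3. unfold g in H3.
        pose proof (Rmin_l (/ t0 - INR (S j)) (INR (S j) + 1 - / t0)).
        pose proof (Rmin_r (/ t0 - INR (S j)) (INR (S j) + 1 - / t0)). lra. }
      assert (Hr0 := rf_bound t0 It0).
      apply dist2_lt; unfold fE; cbn [fst snd]; rewrite Hrf.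
      * replace (rf t0 * sin (th s) - rf t0 * sin (th t0)) with (rf t0 * (sin (th s) - sin (th t0))) by ring.
        rewrite Rabs_mult, (Rabs_right (rf t0)) by lra. pose proof (Rabs_pos (sin (th s) - sin (th t0))). nra.
      * replace (rf t0 * (1 - cos (th s)) - rf t0 * (1 - cos (th t0))) with (- (rf t0 * (cos (th s) - cos (th t0)))) by ring.
        rewrite Rabs_Ropp, Rabs_mult, (Rabs_right (rf t0)) by lra. pose proof (Rabs_pos (cos (th s) - cos (th t0))). nra.
Qed.

Lemma pcont_of_cont : forall a b : R -> R, (forall x, continuity_pt a x) -> (forall x, continuity_pt b x) ->
  pcont dist2 (fun t => (a t, b t)).
Proof.
  intros a b Ha Hb t It e He.
  destruct (cont_pt_elim _ _ (Ha t) (e/2) ltac:(lra)) as [d1 [Hd1 H1]].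
  destruct (cont_pt_elim _ _ (Hb t) (e/2) ltac:(lra)) as [d2 [Hd2 H2]].
  exists (Rmin d1 d2); split. apply Rmin_pos; auto.
  intros s Is Hs. apply dist2_lt; cbn [fst snd].
  apply H1; eapply Rlt_le_trans; [exact Hs| apply Rmin_l].
  apply H2; eapply Rlt_le_trans; [exact Hs| apply Rmin_r].
Qed.

Lemma cont_lin : forall x, continuity_pt (fun t => 2 * PI * t) x.
Proof.
  intro x. apply (continuity_pt_mult (fun _ => 2 * PI) (fun t => t)).
  apply continuity_pt_const; intros a b; auto. apply derivable_continuous_pt, derivable_pt_id.
Qed.

Lemma gE_cont : pcont dist2 gE.
Proof.
  unfold gE. apply (pcont_of_cont (fun t => sin (2 * PI * t)) (fun t => 1 - cos (2 * PI * t))).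
  - intro x. apply (continuity_pt_comp (fun t => 2 * PI * t) sin). apply cont_lin. apply continuity_sin.
  - intro x. apply (continuity_pt_minus (fun _ => 1) (fun t => cos (2 * PI * t))).
    apply continuity_pt_const; intros a b; auto.
    apply (continuity_pt_comp (fun t => 2 * PI * t) cos). apply cont_lin. apply continuity_cos.
Qed.

Lemma gE_HE : forall t, HE (gE t).
Proof.
  intros t. exists O. unfold gE; cbn [fst snd]. simpl INR. rewrite Rinv_1.
  pose proof (sin2_cos2 (2 * PI * t)). unfold Rsqr in H. nra.
Qed.

Lemma gE_0 : gE 0 = (0,0).
Proof. unfold gE. rewrite Rmult_0_r, sin_0, cos_0. f_equal; ring. Qed.
Lemma gE_1 : gE 1 = (0,0).
Proof. unfold gE. rewrite Rmult_1_r, sin_2PI, cos_2PI. f_equal; ring. Qed.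

Lemma cos_eq_2PI : forall u v, 0 <= u <= 2 * PI -> 0 <= v <= 2 * PI -> cos u = cos v ->
  u = v \/ u = 2 * PI - v.
Proof.
  assert (Hc : forall v, cos (2 * PI - v) = cos v).
  { intro v. rewrite cos_minus, cos_2PI, sin_2PI. ring. }
  pose proof PI_RGT_0.
  intros u v Hu Hv E.
  destruct (Rle_dec u PI); destruct (Rle_dec v PI).
  - left. apply cos_inj; lra.
  - right. apply cos_inj; try lra. rewrite Hc. auto.
  - right. rewrite <- (Hc u) in E. assert (2 * PI - u = v) by (apply cos_inj; lra). lra.
  - left. rewrite <- (Hc u), <- (Hc v) in E. assert (2 * PI - u = 2 * PI - v) by (apply cos_inj; lra). lra.
Qed.

Lemma gE_fib : forall t t0, I01 t -> I01 t0 -> gE t = gE t0 -> t = t0 \/ t = 1 - t0.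
Proof.
  intros t t0 [H1 H2] [H3 H4] E. unfold gE in E. injection E as E1 E2.
  pose proof PI_RGT_0.
  assert (cos (2 * PI * t) = cos (2 * PI * t0)) by lra.
  destruct (cos_eq_2PI (2 * PI * t) (2 * PI * t0)) as [F|F]; [nra|nra|auto| |].
  - left. nra.
  - right. nra.
Qed.

Definition kE : R -> (R * R) * (R * R) := pair_path fE gE.
Definition hE : R -> (R * R) * (R * R) := Defs.concat kE (const_loop HExHE0).

Lemma kE_cont : pcont dist22 kE.
Proof.
  intros t It e He.
  destruct (fE_cont t It e He) as [d1 [Hd1 H1]].
  destruct (gE_cont t It e He) as [d2 [Hd2 H2]].
  exists (Rmin d1 d2); split. apply Rmin_pos; auto.
  intros s Is Hs. unfold dist22, kE, pair_path; cbn [fst snd]. apply Rmax_lub_lt.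
  apply H1; auto; eapply Rlt_le_trans; [exact Hs| apply Rmin_l].
  apply H2; auto; eapply Rlt_le_trans; [exact Hs| apply Rmin_r].
Qed.

Lemma kE_0 : kE 0 = HExHE0.
Proof. unfold kE, pair_path. rewrite fE_0, gE_0. reflexivity. Qed.
Lemma kE_1 : kE 1 = HExHE0.
Proof. unfold kE, pair_path. rewrite fE_1, gE_1. reflexivity. Qed.

Lemma kE_HE : forall t, I01 t -> HExHE (kE t).
Proof. intros t It. split; cbn [fst]. apply fE_HE; auto. apply gE_HE. Qed.

Lemma kE_loop : is_loop dist22 HExHE HExHE0 kE.
Proof. split; [apply kE_cont| split; [apply kE_HE| split; [apply kE_0| apply kE_1]]]. Qed.

Lemma kE_fib : finite_fibres kE.
Proof.
  intros z. destruct (classic (exists t0, I01 t0 /\ kE t0 = z)) as [[t0 [I0 E0]]|Hno].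
  - exists (t0 :: (1 - t0) :: nil). intros t It Et.
    assert (gE t = gE t0).
    { pose proof (f_equal snd (eq_trans Et (eq_sym E0))) as E. exact E. }
    destruct (gE_fib t t0 It I0 H) as [E|E]; rewrite E; [left; reflexivity| right; left; reflexivity].
  - exists nil. intros t It Et. exfalso; apply Hno; eauto.
Qed.

Lemma kE_omega : omega_loop dist22 HExHE HExHE0 kE.
Proof. split. apply kE_loop. apply kE_fib. Qed.

Lemma hE_eq : forall t, I01 t -> hE t = kE (clamp 0 1 (2 * t)).
Proof.
  intros t [H0 H1]. unfold hE, Defs.concat, const_loop. destruct (Rle_dec t (1/2)).
  - rewrite clamp_id by lra. reflexivity.
  - unfold clamp. rewrite Rmin_left by lra. rewrite Rmax_right by lra. rewrite kE_1. reflexivity.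
Qed.

Lemma pcont_reparam : forall {P : Type} (d : P -> P -> R) k h phi, pcont d k ->
  (forall t, I01 t -> h t = k (phi t)) -> (forall t, I01 t -> I01 (phi t)) ->
  (forall s t, Rabs (phi s - phi t) <= 2 * Rabs (s - t)) -> pcont d h.
Proof.
  intros P d k h phi Hk Hh Hi Hl t It e He.
  destruct (Hk (phi t) (Hi t It) e He) as [d1 [Hd1 H1]].
  exists (d1 / 2); split. lra. intros s Is Hs. rewrite !Hh by auto.
  apply H1; auto. pose proof (Hl s t). lra.
Qed.

Lemma hE_loop : is_loop dist22 HExHE HExHE0 hE.
Proof.
  assert (Hi : forall t, I01 t -> I01 (clamp 0 1 (2 * t))) by (intros t _; pose proof (clamp_in 0 1 (2*t)); unfold I01; lra).
  split; [|split; [|split]].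
  - apply (pcont_reparam dist22 kE hE (fun t => clamp 0 1 (2 * t))). apply kE_cont. apply hE_eq. auto.
    intros s t. eapply Rle_trans; [apply clamp_lip; lra|].
    replace (2 * s - 2 * t) with (2 * (s - t)) by ring. rewrite Rabs_mult, Rabs_right by lra. lra.
  - intros t It. rewrite hE_eq by auto. apply kE_HE; auto.
  - rewrite hE_eq by (unfold I01; lra). rewrite Rmult_0_r, clamp_id by lra. apply kE_0.
  - unfold hE, Defs.concat, const_loop. destruct (Rle_dec 1 (1/2)); [lra|reflexivity].
Qed.

Lemma hE_Pomega : in_Pomega dist22 HExHE HExHE0 hE.
Proof.
  split. apply hE_loop. exists hE. split.
  - unfold hE. apply ow_cons. apply kE_omega. apply ow_const.
  - destruct hE_loop as [Hc [HZ [H0 H1]]].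
    exists (fun s t => hE t). split; [|split; [|split]].
    + intros s t Is It e He. destruct (Hc t It e He) as [d [Hd H]].
      exists d; split; auto.
    + intros; auto.
    + intros; auto.
    + intros; auto.
Qed.

Lemma psum_tele' : forall g n, psum (fun k => g (S k) - g k) n = g n - g O.
Proof. intros g n; induction n; simpl. ring. rewrite IHn. ring. Qed.

Lemma ang_circle : forall r a b, r > 0 -> Rabs (b - a) < PI / 2 ->
  ang (r * sin a, - r * cos a) (r * sin b, - r * cos b) = b - a.
Proof.
  intros r a b Hr Hab. unfold ang, cross, dot; cbn [fst snd].
  apply Rabs_def2 in Hab.
  assert (Hc : cos (b - a) > 0) by (apply cos_gt_0; lra).
  replace (r * sin a * (- r * cos b) - - r * cos a * (r * sin b)) with (r * r * sin (b - a))
    by (rewrite sin_minus; ring).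
  replace (r * sin a * (r * sin b) + - r * cos a * (- r * cos b)) with (r * r * cos (b - a))
    by (rewrite cos_minus; ring).
  replace (r * r * sin (b - a) / (r * r * cos (b - a))) with (tan (b - a))
    by (unfold tan; field; split; lra).
  apply atan_tan; lra.
Qed.

Lemma wsum_angle : forall (Th : R -> R) r L N, r > 0 -> L > 0 ->
  (forall s t, Rabs (Th s - Th t) <= L * Rabs (s - t)) -> (0 < N)%nat -> L / INR N < PI / 2 ->
  wsum (fun t => (r * sin (Th t), - r * cos (Th t))) N = Th 1 - Th 0.
Proof.
  intros Th r L N Hr HL HLip HN HLN. unfold wsum.
  assert (HNr : INR N > 0) by (apply lt_0_INR; lia).
  rewrite (psum_ext _ (fun k => Th (INR (S k) / INR N) - Th (INR k / INR N))).
  - rewrite (psum_tele' (fun k => Th (INR k / INR N))). simpl INR.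
    rewrite Rdiv_0_l. replace (INR N / INR N) with 1 by (field; lra). reflexivity.
  - intros k Hk. apply ang_circle; auto.
    eapply Rle_lt_trans; [apply HLip|]. rewrite Rabs_minus_sym, grid_step by auto.
    unfold Rdiv in HLN. exact HLN.
Qed.

Definition eps0 (n : nat) : R := / INR (S (S (S n))).
Definition Th (n : nat) (t : R) : R :=
  clamp (2 * PI * INR (S n)) (2 * PI * INR (S (S n))) (2 * PI / clamp (eps0 n) 1 (2 * t)).

Lemma clamp_lo : forall s t x, x <= s -> s <= t -> clamp s t x = s.
Proof. intros; unfold clamp. rewrite Rmin_right by lra. apply Rmax_left; lra. Qed.
Lemma clamp_hi : forall s t x, t <= x -> s <= t -> clamp s t x = t.
Proof. intros; unfold clamp. rewrite Rmin_left by lra. apply Rmax_right; lra. Qed.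

Lemma eps0_pos : forall n, eps0 n > 0.
Proof. intros; apply inv_S_pos. Qed.
Lemma eps0_lt : forall n, eps0 n < / INR (S (S n)).
Proof.
  intros; unfold eps0. apply Rinv_lt_contravar. apply Rmult_lt_0_compat; apply lt_0_INR; lia.
  apply lt_INR; lia.
Qed.
Lemma inv_S_le1 : forall n, / INR (S n) <= 1.
Proof. intros. rewrite <- Rinv_1. apply Rinv_le_contravar. lra. rewrite S_INR; pose proof (pos_INR n); lra. Qed.

Lemma Th_lip : forall n s t, Rabs (Th n s - Th n t) <= (4 * PI / (eps0 n * eps0 n)) * Rabs (s - t).
Proof.
  intros n s t. unfold Th.
  pose proof (eps0_pos n) as He. pose proof PI_RGT_0 as HPI.
  assert (HAB : 2 * PI * INR (S n) <= 2 * PI * INR (S (S n))).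
  { apply Rmult_le_compat_l. lra. apply le_INR; lia. }
  eapply Rle_trans; [apply clamp_lip; auto|].
  assert (He1 : eps0 n <= 1) by apply inv_S_le1.
  set (x := clamp (eps0 n) 1 (2 * s)). set (y := clamp (eps0 n) 1 (2 * t)).
  assert (Hx : eps0 n <= x <= 1) by (apply clamp_in; auto).
  assert (Hy : eps0 n <= y <= 1) by (apply clamp_in; auto).
  assert (Hxy : Rabs (x - y) <= 2 * Rabs (s - t)).
  { unfold x, y. eapply Rle_trans; [apply clamp_lip; auto|].
    replace (2 * s - 2 * t) with (2 * (s - t)) by ring. rewrite Rabs_mult, Rabs_right by lra. lra. }
  replace (2 * PI / x - 2 * PI / y) with (2 * PI * (y - x) / (x * y)) by (field; lra).
  unfold Rdiv. rewrite Rabs_mult, Rabs_mult.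
  rewrite (Rabs_right (2 * PI)) by lra.
  rewrite (Rabs_right (/ (x * y))) by (left; apply Rinv_0_lt_compat; nra).
  rewrite Rabs_minus_sym.
  assert (Hinv : / (x * y) <= / (eps0 n * eps0 n)) by (apply Rinv_le_contravar; nra).
  assert (0 <= / (x * y)) by (left; apply Rinv_0_lt_compat; nra).
  pose proof (Rabs_pos (x - y)). pose proof (Rabs_pos (s - t)).
  assert (Rabs (x - y) * / (x * y) <= 2 * Rabs (s - t) * / (eps0 n * eps0 n)).
  { apply Rmult_le_compat; auto. }
  replace (4 * PI * / (eps0 n * eps0 n) * Rabs (s - t)) with (2 * PI * (2 * Rabs (s - t) * / (eps0 n * eps0 n))) by ring.
  nra.
Qed.

Lemma rn_other : forall n j p, onC j p -> j <> n -> rn n p = (0,0).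
Proof.
  intros n j p Hj Hne. destruct (classic (onC n p)) as [Hn|Hn].
  - rewrite rn_on by auto. apply (onC_two j n); auto.
  - apply rn_off; auto.
Qed.

Lemma vec_00 : forall n, vec n (0,0) = (rho n * sin (2 * PI * INR (S n)), - rho n * cos (2 * PI * INR (S n))).
Proof.
  intros n. unfold vec. rewrite rn_on by apply onC_0. cbn [fst snd].
  rewrite sin_2PIk, cos_2PIk. f_equal; ring.
Qed.
Lemma vec_00' : forall n, vec n (0,0) = (rho n * sin (2 * PI * INR (S (S n))), - rho n * cos (2 * PI * INR (S (S n)))).
Proof.
  intros n. unfold vec. rewrite rn_on by apply onC_0. cbn [fst snd].
  rewrite sin_2PIk, cos_2PIk. f_equal; ring.
Qed.

Lemma hE_vec : forall n t, I01 t -> vec n (fst (hE t)) = (rho n * sin (Th n t), - rho n * cos (Th n t)).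
Proof.
  intros n t It. pose proof PI_RGT_0 as HPI.
  pose proof (eps0_pos n) as He. pose proof (eps0_lt n) as He'.
  assert (HA : 2 * PI <= 2 * PI * INR (S n)).
  { rewrite <- (Rmult_1_r (2*PI)) at 1. apply Rmult_le_compat_l. lra. rewrite S_INR; pose proof (pos_INR n); lra. }
  assert (HAB : 2 * PI * INR (S n) <= 2 * PI * INR (S (S n))).
  { apply Rmult_le_compat_l. lra. apply le_INR; lia. }
  assert (He1 : eps0 n <= 1) by apply inv_S_le1.
  unfold hE, Defs.concat, const_loop. unfold Th. destruct (Rle_dec t (1/2)) as [Ht|Ht].
  - unfold kE, pair_path; cbn [fst].
    destruct It as [It0 It1].
    destruct (Req_dec t 0) as [->|Ht0].
    + rewrite Rmult_0_r, fE_0. rewrite (clamp_lo (eps0 n) 1 0) by lra.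
      rewrite clamp_hi; auto. apply vec_00'.
      unfold eps0. unfold Rdiv. rewrite Rinv_inv. apply Rmult_le_compat_l. lra. apply le_INR; lia.
    + set (tau := 2 * t) in *.
      assert (Htau : 0 < tau <= 1) by (unfold tau; lra).
      assert (HX : 1 <= / tau). { rewrite <- Rinv_1. apply Rinv_le_contravar; lra. }
      destruct (Ip_nat _ HX) as [j Hj]. pose proof (Ip_spec (/ tau)) as Hsp. rewrite Hj in Hsp.
      assert (Etau : tau = / / tau) by (rewrite Rinv_inv; auto).
      destruct (Nat.lt_total j n) as [Hjn|[->|Hjn]].
      * unfold vec. rewrite (rn_other n j) by first [lia | apply fE_onC; lra]. cbn [fst snd].
        assert (Xlt : / tau < INR (S n)) by (assert (INR (S j) + 1 <= INR (S n)) by (rewrite <- S_INR; apply le_INR; lia); lra).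
        assert (Tgt : / INR (S n) < tau).
        { rewrite Etau. apply Rinv_lt_contravar; [apply Rmult_lt_0_compat; try lra; apply lt_0_INR; lia| exact Xlt]. }
        assert (He2 : eps0 n < tau).
        { pose proof (rho_lt n (S n) ltac:(lia)). unfold rho in H. lra. }
        rewrite (clamp_id (eps0 n) 1 tau) by lra.
        rewrite (clamp_lo _ _ (2 * PI / tau)); auto.
        { rewrite sin_2PIk, cos_2PIk. f_equal; ring. }
        unfold Rdiv. apply Rmult_le_compat_l. lra. lra.
      * assert (Hon : onC n (fE tau)) by (apply fE_onC; lra).
        unfold vec. rewrite rn_on by auto.
        assert (Xlt : / tau < INR (S (S n))) by (rewrite (S_INR (S n)); lra).
        assert (Tgt : / INR (S (S n)) < tau).
        { rewrite Etau. apply Rinv_lt_contravar; [apply Rmult_lt_0_compat; try lra; apply lt_0_INR; lia| exact Xlt]. }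
        rewrite (clamp_id (eps0 n) 1 tau) by lra.
        assert (Eth : 2 * PI / tau = th tau) by (unfold th; reflexivity).
        rewrite Eth. rewrite clamp_id.
        { unfold fE, rf, rho; cbn [fst snd]. rewrite Hj. f_equal; ring. }
        unfold th. split; apply Rmult_le_compat_l; lra.
      * unfold vec. rewrite (rn_other n j) by first [lia | apply fE_onC; lra]. cbn [fst snd].
        assert (Xge : INR (S (S n)) <= / tau) by (assert (INR (S (S n)) <= INR (S j)) by (apply le_INR; lia); lra).
        assert (Tle : tau <= / INR (S (S n))).
        { rewrite Etau. apply Rinv_le_contravar; [apply lt_0_INR; lia| exact Xge]. }
        assert (Hcl : clamp (eps0 n) 1 tau <= / INR (S (S n))).
        { unfold clamp. rewrite Rmin_right by lra. apply Rmax_lub; lra. }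
        assert (Hcl0 : eps0 n <= clamp (eps0 n) 1 tau) by (apply clamp_in; auto).
        rewrite (clamp_hi _ _ (2 * PI / clamp (eps0 n) 1 tau)); auto.
        { rewrite sin_2PIk, cos_2PIk. f_equal; ring. }
        replace (2 * PI * INR (S (S n))) with (2 * PI / / INR (S (S n))) by (unfold Rdiv; rewrite Rinv_inv; ring).
        unfold Rdiv. apply Rmult_le_compat_l. lra. apply Rinv_le_contravar; lra.
  - cbn [fst]. unfold HExHE0, HE0; cbn [fst].
    rewrite (clamp_hi (eps0 n) 1 (2 * t)) by lra. replace (2 * PI / 1) with (2 * PI) by field.
    rewrite clamp_lo by auto. apply vec_00.
Qed.

Lemma Th_1 : forall n, Th n 1 = 2 * PI * INR (S n).
Proof.
  intros n. unfold Th. pose proof PI_RGT_0. pose proof (eps0_pos n).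
  assert (eps0 n <= 1) by apply inv_S_le1.
  rewrite (clamp_hi (eps0 n) 1 (2 * 1)) by lra. replace (2 * PI / 1) with (2 * PI) by field.
  apply clamp_lo. rewrite <- (Rmult_1_r (2*PI)) at 1. apply Rmult_le_compat_l. lra. rewrite S_INR; pose proof (pos_INR n); lra.
  apply Rmult_le_compat_l. lra. apply le_INR; lia.
Qed.

Lemma Th_0 : forall n, Th n 0 = 2 * PI * INR (S (S n)).
Proof.
  intros n. unfold Th. pose proof PI_RGT_0. pose proof (eps0_pos n).
  assert (eps0 n <= 1) by apply inv_S_le1.
  rewrite Rmult_0_r, (clamp_lo (eps0 n) 1 0) by lra. apply clamp_hi.
  unfold eps0, Rdiv. rewrite Rinv_inv. apply Rmult_le_compat_l. lra. apply le_INR; lia.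
  apply Rmult_le_compat_l. lra. apply le_INR; lia.
Qed.

Lemma hE_wsum : forall n, exists N0, forall N, (N0 <= N)%nat ->
  wsum (fun t => vec n (fst (hE t))) N = - (2 * PI).
Proof.
  intros n. set (L := 4 * PI / (eps0 n * eps0 n)).
  pose proof PI_RGT_0. pose proof (eps0_pos n).
  assert (HL : L > 0) by (unfold L; apply Rdiv_lt_0_compat; nra).
  destruct (small_inv (PI / 2 / L)) as [K HK]. { apply Rdiv_lt_0_compat; lra. }
  exists (S K). intros N HN.
  rewrite (wsum_ext _ (fun t => (rho n * sin (Th n t), - rho n * cos (Th n t)))) by (intros; apply hE_vec; auto).
  rewrite (wsum_angle (Th n) (rho n) L N).
  - rewrite Th_1, Th_0. rewrite (S_INR (S n)). ring.
  - apply rho_pos.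
  - auto.
  - intros; apply Th_lip.
  - lia.
  - assert (/ INR N <= / INR (S K)) by (apply Rinv_le_contravar; [apply lt_0_INR; lia| apply le_INR; lia]).
    assert (/ INR N < PI / 2 / L) by lra.
    unfold Rdiv in *. apply (Rmult_lt_compat_l L) in H2; auto.
    replace (L * (PI * / 2 * / L)) with (PI * / 2) in H2 by (field; lra). lra.
Qed.

Theorem mainTheorem14 :
  ~ (forall h : R -> (R * R) * (R * R),
       is_loop dist22 HExHE HExHE0 h ->
       ((exists f g : R -> R * R,
           in_Pomega dist2 HE HE0 f /\ in_Pomega dist2 HE HE0 g /\
           homotopic dist22 HExHE HExHE0 h (pair_path f g))
        <-> in_Pomega dist22 HExHE HExHE0 h)).
Proof.
  intro Hall. destruct (Hall hE hE_loop) as [_ Hback].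
  destruct (Hback hE_Pomega) as [f' [g' [[_ [w [Hw Hf'w]]] [_ Hhp]]]].
  destruct (omega_word_rn w Hw) as [B HB].
  pose proof (homotopic_fst hE f' g' Hhp) as H1.
  destruct (homotopic_wsum B _ _ H1) as [N1 HN1].
  destruct (homotopic_wsum B _ _ Hf'w) as [N2 HN2].
  destruct (hE_wsum B) as [N3 HN3].
  set (N := Nat.max N1 (Nat.max N2 N3)).
  specialize (HN1 N ltac:(unfold N; lia)). specialize (HN2 N ltac:(unfold N; lia)).
  specialize (HN3 N ltac:(unfold N; lia)).
  rewrite (wsum_ext (fun t => vec B (w t)) (fun _ => vec B (0,0))) in HN2.
  2: { intros t It. unfold vec. rewrite (HB B (le_n B) t It). rewrite (rn_on B (0,0)) by apply onC_0. reflexivity. }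
  rewrite wsum_const in HN2. pose proof PI_RGT_0. lra.
Qed.
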